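(* Let $\lambda=2$, $c_0=\ln 4$, $c_2=2^{-26/9}$, and let $F:\mathbb{R}^2\to\mathbb{R}^2$ be $$F(a,b)=\big(-2a-e(a,b),\; b+c_0+e(a,b)\big),\qquad e(a,b)=\ln\!\big(1+c_2e^{-(4a+b)/3}\big).$$ Let $\gamma^{inv}:[2.56,\infty)\to[-0.03,0.03]$ be the $F$-invariant curve described in the context. Let $I$ be the line segment $\{(t,\,2t-\tfrac{2}{3}\ln 2^2): -0.4\le t\le 0\}$ in the $(a,b)$-plane. Then $F^3(I)$ intersects the graph $\{(\gamma^{inv}(b),b): b\ge 2.56\}$ of $\gamma^{inv}$ transversally.
   Context: Set $X=[-0.03,0.03]\times[2.56,\infty)$ in the $(a,b)$-plane, and let $\Gamma$ be the set of functions $\gamma:[2.56,\infty)\to[-0.03,0.03]$ with Lipschitz constant at most $1$; the graph of $\gamma$ is $\{(\gamma(b),b)\}\subset X$. The map $F$ is injective, $F^{-1}$ is defined on $X$, and for $\gamma\in\Gamma$ the set $F^{-1}(\text{graph }\gamma)\cap X$ is again the graph of an element $T\gamma\in\Gamma$; $T$ is a contraction of $\Gamma$ in the sup metric, and $\gamma^{inv}$ denotes its unique fixed point, i.e. the unique $\gamma\in\Gamma$ with $F^{-1}(\text{graph }\gamma)\cap X=\text{graph }\gamma$. (The map $F$ is the recursion $(x,y)\mapsto(y,1+\lambda^2x^2/y)$ written in the coordinates $u=\ln x$, $v=\ln y$, $a=u-v+c_0/3$, $b=2u+v$.) *)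

(* Defs.v *)
From Stdlib Require Import Reals Lra.
From Coquelicot Require Import Coquelicot.
Open Scope R_scope.

Definition lam : R := 2.
Definition c0 : R := ln 4.
Definition c2 : R := Rpower 2 (-(26/9)).

Definition e_fun (a b : R) : R := ln (1 + c2 * exp (- (4 * a + b) / 3)).

Definition F (p : R * R) : R * R :=
  (- 2 * fst p - e_fun (fst p) (snd p), snd p + c0 + e_fun (fst p) (snd p)).

Definition inX (p : R * R) : Prop :=
  -0.03 <= fst p <= 0.03 /\ 2.56 <= snd p.

(* Gamma: functions [2.56,oo) -> [-0.03,0.03] with Lipschitz constant <= 1
   (represented as total functions R -> R; only values on [2.56,oo) matter). *)
Definition in_Gamma (g : R -> R) : Prop :=
  (forall b, 2.56 <= b -> -0.03 <= g b <= 0.03) /\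
  (forall b1 b2, 2.56 <= b1 -> 2.56 <= b2 -> Rabs (g b1 - g b2) <= Rabs (b1 - b2)).

Definition graph (g : R -> R) (p : R * R) : Prop :=
  2.56 <= snd p /\ fst p = g (snd p).

(* F^{-1}(graph g) ∩ X = graph g, written without F^{-1} (F injective):
   a point p of X has F p on the graph iff p is on the graph. *)
Definition F_invariant (g : R -> R) : Prop :=
  (forall p, graph g p -> inX p) /\
  (forall p, inX p -> (graph g (F p) <-> graph g p)).

Definition Iseg (t : R) : R * R := (t, 2 * t - 2 / 3 * ln (lam ^ 2)).

Definition curve (t : R) : R * R := F (F (F (Iseg t))).

(* Transversal intersection of the smooth curve F^3(I) with the Lipschitz-1
   graph: the intersection is nonempty and at every intersection point the
   tangent vector of F^3(I) lies strictly outside the cone |da| <= |db|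
   that contains all secants/tangents of graphs of elements of Gamma. *)
Definition meets_transversally (g : R -> R) : Prop :=
  (exists t, -0.4 <= t <= 0 /\ graph g (curve t)) /\
  (forall t, -0.4 <= t <= 0 -> graph g (curve t) ->
     exists da db : R,
       is_derive (fun s => fst (curve s)) t da /\
       is_derive (fun s => snd (curve s)) t db /\
       Rabs db < Rabs da).

(* Main.v *)
Require Import Defs.
From Stdlib Require Import Reals Lra.
From Coquelicot Require Import Coquelicot.
Open Scope R_scope.
Lemma exp_le_mono x y : x <= y -> exp x <= exp y.
Proof. intros [H|H]; [left; now apply exp_increasing | subst; lra]. Qed.

Lemma exp_half x : exp x = exp (x/2) * exp (x/2).
Proof. rewrite <- exp_plus. f_equal. field. Qed.

Lemma exp_ub1 x : x < 1 -> exp x <= / (1 - x).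
Proof.
  intros H. assert (H1 := exp_ineq1_le (-x)).
  rewrite exp_Ropp in H1. assert (0 < exp x) by apply exp_pos.
  apply Rmult_le_reg_l with (1 - x); [lra|].
  rewrite Rinv_r by lra.
  apply Rmult_le_reg_l with (/ exp x); [apply Rinv_0_lt_compat; lra|].
  replace (/ exp x * ((1 - x) * exp x)) with (1 - x) by (field; lra). lra.
Qed.

Lemma exp_4 x : exp x = (exp (x/4))^4.
Proof. rewrite (exp_half x), (exp_half (x/2)). replace (x/2/2) with (x/4) by field. simpl; ring. Qed.

Lemma exp_8 x : exp x = (exp (x/8))^8.
Proof. rewrite exp_4, (exp_half (x/4)). replace (x/4/2) with (x/8) by field. simpl; ring. Qed.

Lemma exp_ub4 x : x < 4 -> exp x <= (/ (1 - x/4))^4.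
Proof. intros H. rewrite exp_4. apply pow_incr. split. left; apply exp_pos. apply exp_ub1. lra. Qed.

Lemma exp_lb8 x : -8 <= x -> (1 + x/8)^8 <= exp x.
Proof. intros H. rewrite exp_8. apply pow_incr. split. lra. apply exp_ineq1_le. Qed.

Definition L := ln 2.

Lemma L_lo : 0.62 <= L.
Proof.
  unfold L. destruct (Rle_lt_dec 0.62 (ln 2)) as [h|h]; auto.
  apply exp_increasing in h. rewrite exp_ln in h by lra.
  assert (H := exp_ub4 0.62 ltac:(lra)). simpl in H. lra.
Qed.

Lemma L_hi : L <= 0.75.
Proof.
  unfold L. destruct (Rle_lt_dec (ln 2) 0.75) as [h|h]; auto.
  apply exp_increasing in h. rewrite exp_ln in h by lra.
  assert (H := exp_lb8 0.75 ltac:(lra)). simpl in H. lra.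
Qed.
Lemma c2_pos : 0 < c2.
Proof. unfold c2, Rpower. apply exp_pos. Qed.

Lemma c2_pow9 : c2 ^ 9 = / 2 ^ 26.
Proof.
  rewrite <- (Rpower_pow 9 c2 c2_pos). unfold c2. rewrite Rpower_mult.
  replace (- (26 / 9) * INR 9) with (- INR 26) by (simpl; field).
  rewrite Rpower_Ropp, Rpower_pow by lra. reflexivity.
Qed.

Lemma c2_bounds : 1/8 <= c2 <= 1/7.
Proof.
  assert (H := c2_pow9). assert (P := c2_pos). split.
  - destruct (Rle_lt_dec (1/8) c2) as [h|h]; auto.
    assert (c2^9 <= (1/8)^9) by (apply pow_incr; lra).
    rewrite H in H0. simpl in H0. lra.
  - destruct (Rle_lt_dec c2 (1/7)) as [h|h]; auto.
    assert ((1/7)^9 <= c2^9) by (apply pow_incr; lra).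
    rewrite H in H0. simpl in H0. lra.
Qed.
Definition q (p : R * R) : R := c2 * exp (- (4 * fst p + snd p) / 3).
Definition sig (p : R * R) : R := q p / (1 + q p).

Lemma q_pos p : 0 < q p.
Proof. unfold q. apply Rmult_lt_0_compat. unfold c2, Rpower; apply exp_pos. apply exp_pos. Qed.

Lemma is_derive_eq (f : R -> R) x l l' : is_derive f x l -> l = l' -> is_derive f x l'.
Proof. intros H ->; exact H. Qed.

Lemma is_derive_extR (f g : R -> R) x l : (forall t, f t = g t) -> is_derive f x l -> is_derive g x l.
Proof. apply is_derive_ext. Qed.

Lemma dplus (f g : R -> R) x a b : is_derive f x a -> is_derive g x b -> is_derive (fun s => f s + g s) x (a + b).
Proof. intros; apply (is_derive_plus f g); auto. Qed.
Lemma dminus (f g : R -> R) x a b : is_derive f x a -> is_derive g x b -> is_derive (fun s => f s - g s) x (a - b).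
Proof. intros; apply (is_derive_minus f g); auto. Qed.
Lemma dconst (c x : R) : is_derive (fun _ => c) x 0.
Proof. apply (is_derive_const c x). Qed.
Lemma dcomp (f g : R -> R) x a b : is_derive f (g x) a -> is_derive g x b -> is_derive (fun s => f (g s)) x (b * a).
Proof. intros; apply (is_derive_comp f g); auto. Qed.

Ltac rq := match goal with |- @eq _ ?a ?b => change (@eq R a b) end.

Lemma dE (P : R -> R * R) (t da db : R) :
  is_derive (fun s => fst (P s)) t da -> is_derive (fun s => snd (P s)) t db ->
  is_derive (fun s => e_fun (fst (P s)) (snd (P s))) t (- sig (P t) * (4*da+db)/3).
Proof.
  intros Ha Hb. unfold e_fun.
  assert (H1 : is_derive (fun s => - (4 * fst (P s) + snd (P s)) / 3) t (- (4*da+db)/3)).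
  { apply is_derive_extR with (fun s => (-1/3) * (4 * fst (P s) + snd (P s))).
    { intros s; cbv beta; field. }
    eapply is_derive_eq. apply is_derive_scal. apply dplus.
    apply is_derive_scal. exact Ha. exact Hb. rq; field. }
  assert (H2 := dcomp exp _ t _ _ (is_derive_exp _) H1).
  assert (H3 : is_derive (fun s => 1 + c2 * exp (- (4 * fst (P s) + snd (P s)) / 3)) t
                 (0 + c2 * (- (4*da+db)/3 * exp (- (4 * fst (P t) + snd (P t)) / 3)))).
  { apply dplus. apply dconst. apply is_derive_scal. exact H2. }
  assert (Hp : 0 < 1 + q (P t)) by (generalize (q_pos (P t)); lra).
  assert (H4 := dcomp ln _ t _ _ (is_derive_ln _ Hp) H3).
  eapply is_derive_eq. exact H4.
  unfold sig, q. unfold q in Hp. rq; field. lra.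
Qed.

Lemma dF1 (P : R -> R * R) (t da db : R) :
  is_derive (fun s => fst (P s)) t da -> is_derive (fun s => snd (P s)) t db ->
  is_derive (fun s => fst (F (P s))) t (-2 * da + sig (P t) * (4*da+db)/3).
Proof.
  intros Ha Hb. unfold F; simpl.
  eapply is_derive_eq. apply dminus. apply is_derive_scal. exact Ha.
  apply dE; eassumption. rq; field.
Qed.

Lemma dF2 (P : R -> R * R) (t da db : R) :
  is_derive (fun s => fst (P s)) t da -> is_derive (fun s => snd (P s)) t db ->
  is_derive (fun s => snd (F (P s))) t (db - sig (P t) * (4*da+db)/3).
Proof.
  intros Ha Hb. unfold F; simpl.
  eapply is_derive_eq. apply dplus. apply dplus. exact Hb. apply dconst.
  apply dE; eassumption. rq; field.
Qed.

Lemma dI1 t : is_derive (fun s => fst (Iseg s)) t 1.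
Proof. unfold Iseg; simpl. auto_derive; auto. Qed.
Lemma dI2 t : is_derive (fun s => snd (Iseg s)) t 2.
Proof. unfold Iseg; simpl. auto_derive; auto; ring. Qed.
Definition E (p : R * R) : R := ln (1 + q p).

Lemma c0_eq : c0 = 2 * L.
Proof. unfold c0, L. replace 4 with (2*2) by ring. rewrite ln_mult by lra. ring. Qed.

Lemma lnlam : ln (lam ^ 2) = 2 * L.
Proof. unfold lam. replace (2^2) with 4 by ring. apply c0_eq. Qed.

Lemma Ffst p : fst (F p) = -2 * fst p - E p.
Proof. reflexivity. Qed.
Lemma Fsnd p : snd (F p) = snd p + 2 * L + E p.
Proof. unfold F, E; simpl. rewrite c0_eq. reflexivity. Qed.

Lemma ln_le_sub1 y : 0 < y -> ln y <= y - 1.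
Proof.
  intros H. assert (H1 := exp_ineq1_le (y - 1)).
  destruct (Rle_lt_dec (ln y) (y-1)) as [h|h]; auto.
  apply exp_increasing in h. rewrite exp_ln in h by lra. lra.
Qed.

Lemma E_ub p : E p <= q p.
Proof.
  unfold E. assert (H := q_pos p). assert (H1 := ln_le_sub1 (1 + q p)). lra.
Qed.

Lemma E_lb p c : 0 <= c -> c <= q p -> c / (1 + c) <= E p.
Proof.
  intros Hc Hq. unfold E. assert (H := q_pos p).
  assert (H1 := ln_le_sub1 (/ (1 + q p)) ltac:(apply Rinv_0_lt_compat; lra)).
  rewrite ln_Rinv in H1 by lra.
  assert (c / (1 + c) <= q p / (1 + q p)).
  { replace (c / (1 + c)) with (1 - / (1 + c)) by (field; lra).
    replace (q p / (1 + q p)) with (1 - / (1 + q p)) by (field; lra).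
    assert (/ (1 + q p) <= / (1 + c)) by (apply Rinv_le_contravar; lra). lra. }
  assert (q p / (1 + q p) = 1 - / (1 + q p)) by (field; lra). lra.
Qed.

Lemma E_pos p : 0 <= E p.
Proof. assert (H := E_lb p 0 ltac:(lra) ltac:(left; apply q_pos)). lra. Qed.

Lemma q_ub p X U : - (4 * fst p + snd p) / 3 <= X -> exp X <= U -> q p <= U / 7.
Proof.
  intros H1 H2. unfold q. assert (H3 := exp_le_mono _ _ H1).
  assert (H4 := c2_bounds). assert (0 < exp (- (4 * fst p + snd p) / 3)) by apply exp_pos.
  nra.
Qed.

Lemma q_lb p X V : X <= - (4 * fst p + snd p) / 3 -> 0 <= V -> V <= exp X -> V / 8 <= q p.
Proof.
  intros H1 H0 H2. unfold q. assert (H3 := exp_le_mono _ _ H1).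
  assert (H4 := c2_bounds). nra.
Qed.

Lemma key_ineq s0 s1 s2 : 0 <= s0 < 1 -> 0 <= s1 < 1 -> 0 <= s2 < 5/6 ->
  Rabs ((2 - s0 * (4 * 1 + 2) / 3) - s1 * (4 * (-2 * 1 + s0 * (4 * 1 + 2) / 3) + (2 - s0 * (4 * 1 + 2) / 3)) / 3
        - s2 * (4 * (-2 * (-2 * 1 + s0 * (4 * 1 + 2) / 3) + s1 * (4 * (-2 * 1 + s0 * (4 * 1 + 2) / 3) + (2 - s0 * (4 * 1 + 2) / 3)) / 3)
                + ((2 - s0 * (4 * 1 + 2) / 3) - s1 * (4 * (-2 * 1 + s0 * (4 * 1 + 2) / 3) + (2 - s0 * (4 * 1 + 2) / 3)) / 3)) / 3)
  < Rabs (-2 * (-2 * (-2 * 1 + s0 * (4 * 1 + 2) / 3) + s1 * (4 * (-2 * 1 + s0 * (4 * 1 + 2) / 3) + (2 - s0 * (4 * 1 + 2) / 3)) / 3)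
        + s2 * (4 * (-2 * (-2 * 1 + s0 * (4 * 1 + 2) / 3) + s1 * (4 * (-2 * 1 + s0 * (4 * 1 + 2) / 3) + (2 - s0 * (4 * 1 + 2) / 3)) / 3)
                + ((2 - s0 * (4 * 1 + 2) / 3) - s1 * (4 * (-2 * 1 + s0 * (4 * 1 + 2) / 3) + (2 - s0 * (4 * 1 + 2) / 3)) / 3)) / 3).
Proof.
  intros H0 H1 H2.
  set (m := 2 * (1 - s0)). set (A := 2 * (2 - s1) - s2 * (3 - s1)). set (B := (1 + s1) - s2 * (3 - s1)).
  match goal with |- Rabs ?x < Rabs ?y => replace x with (m * B) by (unfold m, B; field); replace y with (- (m * A)) by (unfold m, A; field) end.
  assert (HAB1 : B < A) by (unfold A, B; lra).
  assert (HAB2 : - A < B) by (unfold A, B; nra).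
  assert (Hm : 0 < m) by (unfold m; lra).
  rewrite Rabs_Ropp, Rabs_mult, Rabs_mult, (Rabs_right m) by lra.
  apply Rmult_lt_compat_l; auto.
  rewrite (Rabs_right A) by lra. apply Rabs_def1; lra.
Qed.

Lemma orbit t :
  - (4 * fst (Iseg t) + snd (Iseg t)) / 3 = -2 * t + 4/9 * L /\
  - (4 * fst (F (Iseg t)) + snd (F (Iseg t))) / 3 = (6 * t + 3 * E (Iseg t) - 2/3 * L) / 3 /\
  - (4 * fst (F (F (Iseg t))) + snd (F (F (Iseg t)))) / 3
     = - (18 * t + 9 * E (Iseg t) - 3 * E (F (Iseg t)) + 8/3 * L) / 3 /\
  fst (curve t) = -8 * t - 4 * E (Iseg t) + 2 * E (F (Iseg t)) - E (F (F (Iseg t))) /\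
  snd (curve t) = 2 * t + 14/3 * L + E (Iseg t) + E (F (Iseg t)) + E (F (F (Iseg t))).
Proof.
  unfold curve. repeat first [rewrite Ffst | rewrite Fsnd].
  unfold Iseg; rewrite lnlam; simpl. repeat split; field.
Qed.

Lemma sig_bounds p : 0 <= sig p < 1.
Proof.
  unfold sig. assert (H := q_pos p). split.
  apply Rlt_le, Rdiv_lt_0_compat; lra.
  apply Rmult_lt_reg_r with (1 + q p). lra. field_simplify; lra.
Qed.

Lemma sig_56 p : q p < 5 -> sig p < 5/6.
Proof.
  intros H. unfold sig. assert (H0 := q_pos p).
  apply Rmult_lt_reg_r with (1 + q p). lra. field_simplify; lra.
Qed.

Lemma q2_small t : -0.4 <= t <= 0 -> q (F (F (Iseg t))) < 5.
Proof.
  intros Ht. destruct (orbit t) as (o0 & o1 & o2 & _).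
  assert (HL1 := L_lo). assert (HL2 := L_hi).
  assert (Q0 : q (Iseg t) <= 3.84 / 7).
  { apply q_ub with 1.14. lra. eapply Rle_trans. apply exp_ub4. lra. simpl; lra. }
  assert (F0 := E_ub (Iseg t)). assert (G0 := E_pos (Iseg t)).
  assert (Q1 : q (F (Iseg t)) <= 1.56 / 7).
  { apply q_ub with 0.42. lra. eapply Rle_trans. apply exp_ub4. lra. simpl; lra. }
  assert (F1 := E_ub (F (Iseg t))).
  assert (Q2 : q (F (F (Iseg t))) <= 18.9 / 7).
  { apply q_ub with 2.08. lra. eapply Rle_trans. apply exp_ub4. lra. simpl; lra. }
  lra.
Qed.

Lemma a3_at0 : fst (curve 0) < -0.03.
Proof.
  destruct (orbit 0) as (o0 & o1 & o2 & o3 & _).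
  assert (HL1 := L_lo). assert (HL2 := L_hi).
  assert (Q0 : q (Iseg 0) <= 1.516 / 7).
  { apply q_ub with 0.34. lra. eapply Rle_trans. apply exp_ub1. lra. lra. }
  assert (Q0' : 1.27 / 8 <= q (Iseg 0)).
  { apply q_lb with 0.27. lra. lra. assert (H := exp_ineq1_le 0.27). lra. }
  assert (F0 := E_ub (Iseg 0)).
  assert (G0 := E_lb (Iseg 0) (1.27/8) ltac:(lra) Q0').
  assert (Q1 : q (F (Iseg 0)) <= 1.087 / 7).
  { apply q_ub with 0.08. lra. eapply Rle_trans. apply exp_ub1. lra. lra. }
  assert (F1 := E_ub (F (Iseg 0))). assert (G2 := E_pos (F (F (Iseg 0)))).
  lra.
Qed.

Lemma a3_atm02 : 0.03 < fst (curve (-0.2)).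
Proof.
  destruct (orbit (-0.2)) as (o0 & o1 & o2 & o3 & _).
  assert (HL1 := L_lo). assert (HL2 := L_hi).
  assert (Q0 : q (Iseg (-0.2)) <= 2.27 / 7).
  { apply q_ub with 0.74. lra. eapply Rle_trans. apply exp_ub4. lra. simpl; lra. }
  assert (Q0' : 1.675 / 8 <= q (Iseg (-0.2))).
  { apply q_lb with 0.675. lra. lra. assert (H := exp_ineq1_le 0.675). lra. }
  assert (F0 := E_ub (Iseg (-0.2))).
  assert (G0 := E_lb (Iseg (-0.2)) (1.675/8) ltac:(lra) Q0').
  assert (Q1 : q (F (Iseg (-0.2))) <= 1 / 7).
  { apply q_ub with 0. lra. rewrite exp_0; lra. }
  assert (F1 := E_ub (F (Iseg (-0.2)))). assert (G1 := E_pos (F (Iseg (-0.2)))).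
  assert (Q2 : q (F (F (Iseg (-0.2)))) <= 1.39 / 7).
  { apply q_ub with 0.28. lra. eapply Rle_trans. apply exp_ub1. lra. lra. }
  assert (F2 := E_ub (F (F (Iseg (-0.2))))).
  lra.
Qed.

Lemma b3_big t : -0.2 <= t <= 0 -> 2.56 <= snd (curve t).
Proof.
  intros Ht. destruct (orbit t) as (o0 & o1 & o2 & o3 & o4).
  assert (HL1 := L_lo). assert (HL2 := L_hi).
  assert (Q0' : 1 / 8 <= q (Iseg t)).
  { apply q_lb with 0. lra. lra. rewrite exp_0; lra. }
  assert (G0 := E_lb (Iseg t) (1/8) ltac:(lra) Q0').
  assert (G1 := E_pos (F (Iseg t))). assert (G2 := E_pos (F (F (Iseg t)))).
  lra.
Qed.

Lemma curve_deriv t : -0.4 <= t <= 0 -> exists da db,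
  is_derive (fun s => fst (curve s)) t da /\ is_derive (fun s => snd (curve s)) t db /\
  Rabs db < Rabs da.
Proof.
  intros Ht.
  assert (A1 := dF1 Iseg t 1 2 (dI1 t) (dI2 t)).
  assert (B1 := dF2 Iseg t 1 2 (dI1 t) (dI2 t)).
  assert (A2 := dF1 (fun s => F (Iseg s)) t _ _ A1 B1).
  assert (B2 := dF2 (fun s => F (Iseg s)) t _ _ A1 B1).
  assert (A3 := dF1 (fun s => F (F (Iseg s))) t _ _ A2 B2).
  assert (B3 := dF2 (fun s => F (F (Iseg s))) t _ _ A2 B2).
  do 2 eexists. split; [exact A3|]. split; [exact B3|].
  apply key_ineq; try apply sig_bounds.
  split. apply sig_bounds. apply sig_56. apply q2_small; exact Ht.
Qed.

Lemma curve_ex_derive t : ex_derive (fun s => fst (curve s)) t /\ ex_derive (fun s => snd (curve s)) t.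
Proof.
  assert (A1 := dF1 Iseg t 1 2 (dI1 t) (dI2 t)).
  assert (B1 := dF2 Iseg t 1 2 (dI1 t) (dI2 t)).
  assert (A2 := dF1 (fun s => F (Iseg s)) t _ _ A1 B1).
  assert (B2 := dF2 (fun s => F (Iseg s)) t _ _ A1 B1).
  assert (A3 := dF1 (fun s => F (F (Iseg s))) t _ _ A2 B2).
  assert (B3 := dF2 (fun s => F (F (Iseg s))) t _ _ A2 B2).
  split; eexists; eassumption.
Qed.

Lemma cont_of_derive (f : R -> R) t : ex_derive f t -> continuity_pt f t.
Proof. intros H. apply continuity_pt_filterlim. apply (ex_derive_continuous f t H). Qed.

Lemma rmax_lip c x y : Rabs (Rmax c x - Rmax c y) <= Rabs (x - y).
Proof.
  unfold Rmax. destruct (Rle_dec c x); destruct (Rle_dec c y);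
  unfold Rabs; repeat destruct Rcase_abs; lra.
Qed.

Lemma G_cont g : in_Gamma g -> continuity (fun b => g (Rmax 2.56 b)).
Proof.
  intros [_ Hlip] x. unfold continuity_pt, continue_in, limit1_in, limit_in.
  intros eps Heps. exists eps. split; auto.
  intros y [_ Hy]. simpl in *. unfold R_dist in *.
  eapply Rle_lt_trans; [|exact Hy].
  eapply Rle_trans. apply Hlip; apply Rmax_l. apply rmax_lip.
Qed.

Theorem lemma1 : forall g : R -> R,
  in_Gamma g -> F_invariant g -> meets_transversally g.
Proof.
  intros g Hg _. split.
  - set (h := fun t => g (Rmax 2.56 (snd (curve t))) - fst (curve t)).
    assert (Hc : continuity h).
    { intros t. unfold h. apply continuity_pt_minus.
      - apply (continuity_pt_comp (fun s => snd (curve s)) (fun b => g (Rmax 2.56 b))).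
        apply cont_of_derive, curve_ex_derive. apply G_cont; exact Hg.
      - apply cont_of_derive, curve_ex_derive. }
    assert (Hb := proj1 Hg).
    assert (h1 : h (-0.2) < 0).
    { unfold h. assert (H := Hb (Rmax 2.56 (snd (curve (-0.2)))) (Rmax_l _ _)).
      assert (H2 := a3_atm02). lra. }
    assert (h2 : 0 < h 0).
    { unfold h. assert (H := Hb (Rmax 2.56 (snd (curve 0))) (Rmax_l _ _)).
      assert (H2 := a3_at0). lra. }
    destruct (IVT h (-0.2) 0 Hc ltac:(lra) h1 h2) as [z [Hz Hhz]].
    exists z. split. lra.
    assert (Hs := b3_big z Hz).
    unfold graph. split. exact Hs.
    unfold h in Hhz. rewrite Rmax_right in Hhz by lra. lra.
  - intros t Ht _. apply curve_deriv; exact Ht.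
Qed.
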